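(* Let $z=(z_1,\ldots,z_n)\in\mathbb{R}^n$, let $\mathcal{I}=\{i : z_i>0\}$, and let $f_z(a)=\sum_{i=1}^n |z_i-a_i|$ for $a\in\mathbb{R}^n$. Let $d\in DS_n$ be a minimizer of $f_z$ over $DS_n$ such that $d_j>0$ for at least one $j\notin\mathcal{I}$. Then there exists $d^*\in DS_n$ with $d^*_i=0$ for all $i\notin\mathcal{I}$ and $f_z(d^* )=f_z(d)$.
   Context: All graphs are simple (no loops, no multiple edges) on the vertex set $\{1,\ldots,n\}$. The degree sequence of such a graph is the vector $(d_1,\ldots,d_n)$ where $d_i$ is the number of neighbours of vertex $i$. $DS_n$ denotes the set of all degree sequences of simple graphs on $\{1,\ldots,n\}$. *)

(* Defs.v *)
From HB Require Import structures.
From mathcomp Require Import all_boot all_order all_algebra.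
Set Implicit Arguments. Unset Strict Implicit. Unset Printing Implicit Defensive.
Import Order.TTheory GRing.Theory Num.Theory.

Definition simple_graph (n : nat) (e : rel 'I_n) : Prop :=
  symmetric e /\ irreflexive e.

Definition degree (n : nat) (e : rel 'I_n) (i : 'I_n) : nat :=
  #|[set j | e i j]|.

Definition DS (n : nat) (d : 'I_n -> nat) : Prop :=
  exists e : rel 'I_n, simple_graph e /\ forall i, d i = degree e i.

Definition fz (R : realFieldType) (n : nat) (z : 'I_n -> R) (a : 'I_n -> nat) : R :=
  (\sum_(i < n) `|z i - (a i)%:R|)%R.

(* Main.v *)
Require Import Defs.
From mathcomp Require Import all_boot all_order all_algebra.
From mathcomp Require Import ring lra.
Import Order.TTheory GRing.Theory Num.Theory.
Local Open Scope ring_scope.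

Lemma card_sum (n : nat) (P : pred 'I_n) :
  #|[set j | P j]| = (\sum_j (P j : nat))%N.
Proof.
rewrite -sum1_card big_mkcond /=; apply: eq_bigr => j _.
by rewrite inE; case: (P j).
Qed.

Theorem lemma4 (R : realFieldType) (n : nat) (z : 'I_n -> R) (d : 'I_n -> nat)
  (hd : DS d)
  (hmin : forall a : 'I_n -> nat, DS a -> fz z d <= fz z a)
  (hj : exists j : 'I_n, z j <= 0 /\ (0 < d j)%N) :
  exists ds : 'I_n -> nat,
    DS ds /\ (forall i : 'I_n, z i <= 0 -> ds i = 0%N) /\ fz z ds = fz z d.
Proof.
case: hd => e [[esym eirr] hde].
pose e' : rel 'I_n := fun x y => [&& e x y, 0 < z x & 0 < z y].
have e'sym : symmetric e'.
  by move=> x y; rewrite /e' esym; case: (e y x); case: (0 < z x); case: (0 < z y).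
have e'irr : irreflexive e' by move=> x; rewrite /e' eirr.
have hDS : DS (degree e') by exists e'; split.
have hzero : forall i : 'I_n, z i <= 0 -> degree e' i = 0%N.
  move=> i hi; rewrite /degree card_sum big1 // => j _.
  by rewrite /e' ltNge hi /= andbF.
exists (degree e'); split => //; split => //.
apply/le_anti; rewrite hmin // andbT.
pose D i := (\sum_j (e i j : nat))%N.
pose D' i := (\sum_j (e' i j : nat))%N.
pose C i := (\sum_j ((e i j && (z j <= 0)%R) : nat))%N.
pose g i := if 0 < z i then C i else 0%N.
pose h i := if 0 < z i then 0%N else D i.
have hdD : forall i, d i = D i by move=> i; rewrite hde /degree card_sum.
have hdD' : forall i, degree e' i = D' i by move=> i; rewrite /degree card_sum.
have key : forall i, `|z i - (D' i)%:R| + (h i)%:R <= `|z i - (D i)%:R| + (g i)%:R.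
  move=> i; rewrite /g /h; case: ifP => hzi.
  - have -> : D i = (D' i + C i)%N.
      rewrite /D /D' /C -big_split /=; apply: eq_bigr => j _.
      rewrite /e' hzi /=; case: (e i j) => //=.
      by rewrite leNgt; case: (0 < z j).
    rewrite natrD addr0.
    have -> : z i - (D' i)%:R = (z i - ((D' i)%:R + (C i)%:R)) + (C i)%:R by ring.
    by rewrite -[X in _ <= _ + X]normr_nat ler_normD.
  - have hz : z i <= 0 by rewrite leNgt hzi.
    rewrite -hdD' hzero // subr0 addr0 (ler0_norm hz).
    have hD : 0 <= (D i)%:R :> R by rewrite ler0n.
    rewrite (ler0_norm); last by lra.
    lra.
have hsum : \sum_i (`|z i - (D' i)%:R| + (h i)%:R) <= \sum_i (`|z i - (D i)%:R| + (g i)%:R).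
  by apply: ler_sum => i _; exact: key.
rewrite !big_split /= -!natr_sum in hsum.
have hgh : (\sum_i g i <= \sum_i h i)%N.
  have -> : (\sum_i g i = \sum_i \sum_j [&& (0 < z i)%R, e i j & (z j <= 0)%R])%N.
    apply: eq_bigr => i _; rewrite /g /C; case: ifP => hi /=.
      by apply: eq_bigr.
    by rewrite big1.
  have -> : (\sum_i h i = \sum_i \sum_j [&& (z i <= 0)%R & e i j])%N.
    apply: eq_bigr => i _; rewrite /h /D leNgt; case: ifP => hi /=.
      by rewrite big1.
    by apply: eq_bigr.
  rewrite exchange_big /=; apply: leq_sum => j _; apply: leq_sum => i _.
  rewrite esym; case: (0 < z i); case: (e j i); case: (z j <= 0) => //.
have hgh' : (\sum_i g i)%:R <= (\sum_i h i)%:R :> R by rewrite ler_nat.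
have -> : fz z (degree e') = \sum_i `|z i - (D' i)%:R|.
  by apply: eq_bigr => i _; rewrite hdD'.
have -> : fz z d = \sum_i `|z i - (D i)%:R|.
  by apply: eq_bigr => i _; rewrite hdD.
lra.
Qed.
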